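(* Let $k$ be a natural number, let $(X,\Sigma)$ be a measurable space, and let $\mu,\nu$ be finite measures on $(X,\Sigma)$ with $\mu$ absolutely continuous with respect to $\nu$; let $f\colon X\to[0,\infty)$ be a (measurable) Radon–Nikodym derivative $f=\frac{d\mu}{d\nu}$. Assume that one of the following holds: (I) $G=\mathbb{R}$ and $\nu$ is non-atomic; or (II) $G=\mathbb{Z}$, $X$ is finite, $\Sigma=2^X$, and $\nu$ is the counting measure. Let $q=(q_1,\dots,q_k)\in(G\cap[0,\infty))^k$ satisfy $q_1+\dots+q_k=\nu(X)$, and let $s_1\le s_2\le\dots\le s_k$ be real numbers. For $P=(A_1,\dots,A_k)\in\mathcal{P}_{\nu,q}$ define the score $s(P):=\sum_{i=1}^k s_i\,\mu(A_i)$. Let $Q=(B_1,\dots,B_k)\in\mathcal{P}_{\nu,q}$ be any partition such that $\sup_{B_i}f\le\inf_{B_j}f$ for all $i,j\in[k]$ with $i<j$ (with the conventions $\sup\emptyset=-\infty$, $\inf\emptyset=\infty$). Then $s(Q)\ge s(P)$ for every $P\in\mathcal{P}_{\nu,q}$.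
   Context: $[k]:=\{1,\dots,k\}$. $\mathcal{P}_k$ denotes the set of all ordered partitions $P=(A_1,\dots,A_k)$ of $X$ with $A_i\in\Sigma$ for all $i$ (i.e. the $A_i$ are pairwise disjoint measurable sets, possibly empty, whose union is $X$). $\mathcal{P}_{\nu,q}:=\{P=(A_1,\dots,A_k)\in\mathcal{P}_k:\ \nu(A_i)=q_i\ \text{for all } i\in[k]\}$. *)

(* Defs.v *)
From HB Require Import structures.
From mathcomp Require Import all_boot all_order all_algebra.
From mathcomp Require Import all_classical all_reals all_analysis.
Set Implicit Arguments. Unset Strict Implicit. Unset Printing Implicit Defensive.
Import Order.TTheory GRing.Theory Num.Theory.
Local Open Scope classical_set_scope.
Local Open Scope ring_scope.

Definition is_atom d (X : measurableType d) (R : realType)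
  (nu : set X -> \bar R) (A : set X) : Prop :=
  measurable A /\ (0 < nu A)%E /\
  forall B, measurable B -> B `<=` A -> nu B = 0%E \/ nu B = nu A.

Definition nonatomic d (X : measurableType d) (R : realType)
  (nu : set X -> \bar R) : Prop := forall A, ~ is_atom nu A.

Definition is_partition d (X : measurableType d) (k : nat)
  (A : 'I_k -> set X) : Prop :=
  (forall i, measurable (A i)) /\ trivIset setT A /\ \bigcup_i A i = setT.

Definition in_Pnuq d (X : measurableType d) (R : realType) (k : nat)
  (nu : set X -> \bar R) (q : 'I_k -> R) (A : 'I_k -> set X) : Prop :=
  is_partition A /\ forall i, nu (A i) = (q i)%:E.

Definition score d (X : measurableType d) (R : realType) (k : nat)
  (mu : set X -> \bar R) (s : 'I_k -> R) (A : 'I_k -> set X) : \bar R :=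
  (\sum_(i < k) (s i)%:E * mu (A i))%E.

(* Main.v *)
Require Import Defs.
From HB Require Import structures.
From mathcomp Require Import all_boot all_order all_algebra.
From mathcomp Require Import all_classical all_reals all_analysis.
From mathcomp Require Import measurable_realfun lra.
Import Order.TTheory GRing.Theory Num.Theory.
Local Open Scope classical_set_scope.
Local Open Scope ring_scope.
Lemma key_le (R : realType) (d : measure_display) (X : measurableType d)
  (mu nu : {finite_measure set X -> \bar R})
  (Hac : mu `<< nu)
  (f : X -> R) (Hfm : measurable_fun setT f) (Hf0 : forall x, 0 <= f x)
  (Hf : forall A, measurable A -> mu A = (\int[nu]_(x in A) (f x)%:E)%E)
  (S T : set X) (mS : measurable S) (mT : measurable T)
  (HST : nu S = nu T) (Hth : forall x y, ~ T x -> T y -> f x <= f y) :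
  (mu S <= mu T)%E.
Proof.
rewrite (measureDI mu mS mT) (measureDI mu mT mS) setIC.
apply: leeD => //.
have mSTm : measurable (S `\` T) by exact: measurableD.
have mTSm : measurable (T `\` S) by exact: measurableD.
have nuE : nu (S `\` T) = nu (T `\` S).
  move: HST; rewrite (measureDI nu mS mT) (measureDI nu mT mS) setIC.
  have hc := fin_num_measure nu _ (measurableI _ _ mT mS).
  by move=> H; rewrite -(addeK (nu (S `\` T)) hc) H addeK.
have mfE (D : set X) : measurable D -> measurable_fun D (EFin \o f).
  by move=> mD; apply/measurable_EFinP; exact: measurable_funTS.
case: (pselect (exists y, (T `\` S) y)) => [[y0 Hy0]|Hno].
- pose c := inf [set f y | y in T `\` S].
  have c0 : 0 <= c.
    apply: lb_le_inf; first by exists (f y0), y0.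
    by move=> z [y _ <-].
  have cle y : (T `\` S) y -> c <= f y.
    move=> Hy; apply: ge_inf; last by exists y.
    by exists 0 => z [w _ <-].
  have lec x : (S `\` T) x -> f x <= c.
    move=> [Sx nTx]; apply: lb_le_inf; first by exists (f y0), y0.
    by move=> z [y [Ty _] <-]; apply: Hth.
  change (mu (S `\` T) <= mu (T `\` S))%E; rewrite (Hf _ mSTm) (Hf _ mTSm).
  apply: (@le_trans _ _ (\int[nu]_(x in S `\` T) (cst c%:E) x)%E).
    apply: ge0_le_integral => //; try (by move=> x _; rewrite lee_fin);
      try exact: mfE; try exact: measurable_cst;
      try (by move=> x Hx; rewrite lee_fin; apply: lec).
  apply: (@le_trans _ _ (\int[nu]_(x in T `\` S) (cst c%:E) x)%E).
    rewrite integral_cst // integral_cst //.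
    by rewrite le_eqVlt; apply/orP; left; apply/eqP; exact: (congr1 (fun z => (c%:E * z)%E) nuE).
  apply: ge0_le_integral => //; try (by move=> x _; rewrite lee_fin);
    try exact: mfE; try exact: measurable_cst;
    try (by move=> x Hx; rewrite lee_fin; apply: cle).
- have TS0 : T `\` S = set0.
    by apply/seteqP; split => // x Hx; apply: Hno; exists x.
  have : nu (S `\` T) = 0%E by rewrite nuE TS0 measure0.
  move=> /(measure0_null_setP nu mSTm) /Hac /(measure0_null_setP mu mSTm) ->.
  by [].
Qed.

Lemma abel (R : realType) (n : nat) (s a : nat -> R) :
  (forall i j, (i <= j)%N -> (j < n)%N -> s i <= s j) ->
  (forall m, 0 <= \sum_(m <= i < n) a i) ->
  forall m, s m * \sum_(m <= i < n) a i <= \sum_(m <= i < n) s i * a i.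
Proof.
move=> Hs Ha m; move Hd: (n - m)%N => d; elim: d m Hd => [|d IH] m Hd.
  have nm : (n <= m)%N by rewrite -subn_eq0 Hd.
  by rewrite !big_geq // mulr0.
have mn : (m < n)%N by rewrite -subn_gt0 Hd.
rewrite !(big_ltn mn).
case: (ltnP m.+1 n) => h; last by rewrite !big_geq // !addr0.
have := IH m.+1 (ltac:(by rewrite subnS Hd)).
have T0 := Ha m.+1.
have := Hs m m.+1 (leqnSn m) h.
move: (\sum_(m.+1 <= i < n) a i) (\sum_(m.+1 <= i < n) s i * a i) T0 => T U T0 hs HU.
nra.
Qed.

Lemma bigU_mem (T : Type) (k : nat) (P : pred 'I_k) (A : 'I_k -> set T) x :
  (\big[setU/set0]_(i < k | P i) A i) x <-> exists i, P i /\ A i x.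
Proof.
split.
  elim/big_rec: _ => [//|i U Pi IH [Aix|Ux]]; first by exists i.
  exact: IH.
move=> [i [Pi Aix]]; rewrite (bigD1 i) //=; by left.
Qed.

Lemma fmeasure_bigU (R : realType) (d : measure_display) (X : measurableType d)
  (mu : {finite_measure set X -> \bar R}) k (A : 'I_k -> set X) m :
  (forall i, measurable (A i)) -> trivIset setT A ->
  mu (\big[setU/set0]_(i < k | (m <= i)%N) A i) =
  ((\sum_(i < k | (m <= i)%N) fine (mu (A i)))%:E)%E.
Proof.
move=> mA tA; rewrite -sumEFin.
rewrite (eq_bigr (fun i => mu (A i))) => [|i _]; last by rewrite fineK // fin_num_measure.
exact: measure_bigsetU_ord.
Qed.

Theorem theorem3 (R : realType) (k : nat) (d : measure_display)
  (X : measurableType d)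
  (mu nu : {finite_measure set X -> \bar R})
  (Hac : mu `<< nu)
  (f : X -> R) (Hfm : measurable_fun setT f) (Hf0 : forall x, 0 <= f x)
  (Hf : forall A, measurable A -> mu A = (\int[nu]_(x in A) (f x)%:E)%E)
  (q : 'I_k -> R)
  (Hcase :
     (* (I) G = R, nu non-atomic *)
     (nonatomic nu /\ (forall i, 0 <= q i))
     \/
     (* (II) G = Z, X finite, Sigma = 2^X, nu counting measure *)
     (finite_set [set: X] /\ (forall A : set X, measurable A) /\
      (forall A : set X, nu A = @counting X R A) /\
      (forall i, q i \is a Num.nat)))
  (Hq : (\sum_(i < k) (q i)%:E)%E = nu setT)
  (s : 'I_k -> R) (Hs : forall i j : 'I_k, (i <= j)%N -> s i <= s j)
  (B : 'I_k -> set X) (HB : in_Pnuq nu q B)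
  (HBsort : forall i j : 'I_k, (i < j)%N ->
     (ereal_sup ((fun x => (f x)%:E) @` B i) <=
      ereal_inf ((fun x => (f x)%:E) @` B j))%E) :
  forall P : 'I_k -> set X, in_Pnuq nu q P ->
    (score mu s P <= score mu s B)%E.
Proof.
move=> P HP.
case: HB => [[mB [tB cB]] nuB]; case: HP => [[mP [tP cP]] nuP].
have scoreE (A : 'I_k -> set X) : (forall i, measurable (A i)) ->
    score mu s A = ((\sum_(i < k) s i * fine (mu (A i)))%:E)%E.
  move=> mA; rewrite /score -sumEFin; apply: eq_bigr => i _.
  by rewrite -[mu (A i)]fineK ?fin_num_measure // fineK ?fin_num_measure.
rewrite !scoreE // lee_fin.
pose TT (A : 'I_k -> set X) (m : nat) := \big[setU/set0]_(i < k | (m <= i)%N) A i.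
have mTT A m : (forall i, measurable (A i)) -> measurable (TT A m).
  by move=> mA; apply: bigsetU_measurable => i _; apply: mA.
have nuTT m : nu (TT P m) = nu (TT B m).
  rewrite /TT !fmeasure_bigU //; congr EFin; apply: eq_bigr => i _.
  by rewrite nuP nuB.
have thB m : forall x y, ~ TT B m x -> TT B m y -> f x <= f y.
  move=> x y nx /bigU_mem [j [mj Bjy]].
  have : [set: X] x by [].
  rewrite -cB => -[i _ Bix].
  have ij : (i < j)%N.
    case: (ltnP i m) => [im|mi]; first exact: leq_trans im mj.
    by exfalso; apply: nx; apply/bigU_mem; exists i.
  have h1 : ((f x)%:E <= ereal_sup ((fun x => (f x)%:E) @` B i))%E.
    by apply: ereal_sup_ubound; exists x.
  have h2 : (ereal_inf ((fun x => (f x)%:E) @` B j) <= (f y)%:E)%E.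
    by apply: ereal_inf_lbound; exists y.
  by rewrite -lee_fin; apply: le_trans h1 (le_trans (HBsort i j ij) h2).
have tail m : \sum_(i < k | (m <= i)%N) fine (mu (P i)) <=
              \sum_(i < k | (m <= i)%N) fine (mu (B i)).
  rewrite -lee_fin -!fmeasure_bigU //.
  exact: (@key_le _ _ _ mu nu Hac f Hfm Hf0 Hf _ _ (mTT P m mP) (mTT B m mB) (nuTT m) (thB m)).
have tot : \sum_(i < k) fine (mu (P i)) = \sum_(i < k) fine (mu (B i)).
  have E (A : 'I_k -> set X) :
    \sum_(i < k | (0 <= i)%N) fine (mu (A i)) = \sum_(i < k) fine (mu (A i)).
    by apply: eq_bigl.
  apply/eqP; rewrite eq_le -!E tail /=.
  rewrite -lee_fin -!fmeasure_bigU //.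
  apply: (@key_le _ _ _ mu nu Hac f Hfm Hf0 Hf _ _ (mTT B 0%N mB) (mTT P 0%N mP) (esym (nuTT 0%N))).
  move=> x y nx _; exfalso; apply: nx.
  have : [set: X] x by [].
  by rewrite -cP => -[i _ Pix]; apply/bigU_mem; exists i.
pose a n := oapp (fun i : 'I_k => fine (mu (B i)) - fine (mu (P i))) 0 (insub n).
pose s' n := oapp s 0 (insub n).
have conv (F : 'I_k -> R) m :
    \sum_(m <= i < k) oapp F 0 (insub i) = \sum_(i < k | (m <= i)%N) F i.
  rewrite big_geq_mkord; apply: eq_bigr => i _; by rewrite valK.
have Hab := @abel R k s' a.
have := Hab _ _ 0%N.
have -> : \sum_(0 <= i < k) s' i * a i =
          \sum_(0 <= i < k) oapp (fun i => s i * (fine (mu (B i)) - fine (mu (P i)))) 0 (insub i).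
  by apply: eq_big_nat => i _; rewrite /s' /a; case: (insub i) => [j|] //=; rewrite mulr0.
rewrite conv /a conv sumrB tot subrr mulr0.
under eq_bigl do rewrite leq0n.
rewrite (eq_bigr (fun i => s i * fine (mu (B i)) - s i * fine (mu (P i)))) => [|i _]; last by rewrite mulrBr.
rewrite sumrB subr_ge0; apply.
- move=> i j ij jk; rewrite /s'.
  have ik : (i < k)%N by exact: leq_ltn_trans ij jk.
  case: insubP => [i2 _ ei|]; last by rewrite ik.
  case: insubP => [j2 _ ej|]; last by rewrite jk.
  by apply: Hs; rewrite ei ej.
- move=> m; rewrite /a conv sumrB subr_ge0; exact: tail.
Qed.
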